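(* Let $I$ be an ideal on a cardinal $\kappa$ and $\theta$ a regular cardinal. The following are equivalent: (1) $I$ is weakly $\theta$-saturated and $\theta$-indecomposable. (2) Whenever $\langle B_i:i<\theta\rangle$ is a $\subseteq$-increasing sequence of subsets of $\kappa$, there is $i^*<\theta$ such that $B_i=_I\bigcup_{j<\theta}B_j$ for all $i$ with $i^*\leq i<\theta$. (3) Whenever $\langle A_i:i<\theta\rangle$ is a sequence of $I$-positive subsets of $\kappa$, $\bigcap_{i<\theta}\bigcup_{i\leq j<\theta}A_j\neq\emptyset$.
   Context: By an ideal on a cardinal $\kappa$ we mean a proper ideal on $\kappa$ containing all bounded subsets of $\kappa$. $I$-positive means not in $I$; $A=_I B$ means $A\setminus B,B\setminus A\in I$. $I$ is weakly $\theta$-saturated if there is no partition of $\kappa$ into $\theta$ pairwise disjoint $I$-positive sets. $I$ is $\theta$-indecomposable if whenever $\langle A_i:i<\theta\rangle$ are subsets of $\kappa$ with $\bigcup_{i<\theta}A_i\notin I$, there is $w\subseteq\theta$ with $|w|<\theta$ and $\bigcup_{i\in w}A_i\notin I$. *)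

(* Defs.v *)
(* Cardinals are represented von-Neumann style as initial
   ordinals: a type carrying a strict well-order such that no proper initial
   segment is equinumerous with (injects onto) the whole type. *)
From Stdlib Require Import Classical.

Definition inj_le {A B : Type} (X : A -> Prop) (Y : B -> Prop) : Prop :=
  exists f : {a : A | X a} -> {b : B | Y b},
    forall u v, f u = f v -> u = v.

Definition card_lt {A B : Type} (X : A -> Prop) (Y : B -> Prop) : Prop :=
  inj_le X Y /\ ~ inj_le Y X.

Definition fullset (T : Type) : T -> Prop := fun _ => True.

Definition well_order {T : Type} (lt : T -> T -> Prop) : Prop :=
  (forall x, ~ lt x x) /\
  (forall x y z, lt x y -> lt y z -> lt x z) /\
  (forall x y, lt x y \/ x = y \/ lt y x) /\
  well_founded lt.

Definition is_cardinal {T : Type} (lt : T -> T -> Prop) : Prop :=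
  well_order lt /\ forall a : T, ~ inj_le (fullset T) (fun x => lt x a).

Definition leo {T : Type} (lt : T -> T -> Prop) (x y : T) : Prop :=
  x = y \/ lt x y.

Definition is_regular_cardinal {T : Type} (lt : T -> T -> Prop) : Prop :=
  is_cardinal lt /\
  inj_le (fullset nat) (fullset T) /\
  forall S : T -> Prop,
    (forall a, exists b, S b /\ leo lt a b) -> ~ card_lt S (fullset T).

Definition bounded {K : Type} (lt : K -> K -> Prop) (X : K -> Prop) : Prop :=
  exists a, forall x, X x -> lt x a.

Definition is_ideal {K : Type} (lt : K -> K -> Prop) (I : (K -> Prop) -> Prop)
  : Prop :=
  I (fun _ => False) /\
  (forall X Y : K -> Prop, I Y -> (forall x, X x -> Y x) -> I X) /\
  (forall X Y : K -> Prop, I X -> I Y -> I (fun x => X x \/ Y x)) /\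
  ~ I (fullset K) /\
  (forall X, bounded lt X -> I X).

Definition positive {K : Type} (I : (K -> Prop) -> Prop) (X : K -> Prop) :=
  ~ I X.

Definition eqI {K : Type} (I : (K -> Prop) -> Prop) (X Y : K -> Prop) :=
  I (fun x => X x /\ ~ Y x) /\ I (fun x => Y x /\ ~ X x).

Definition weakly_saturated {K Th : Type} (I : (K -> Prop) -> Prop) : Prop :=
  ~ exists P : Th -> K -> Prop,
      (forall i, positive I (P i)) /\
      (forall i j x, i <> j -> P i x -> P j x -> False) /\
      (forall x, exists i, P i x).

Definition indecomposable {K Th : Type} (I : (K -> Prop) -> Prop) : Prop :=
  forall A : Th -> K -> Prop,
    positive I (fun x => exists i, A i x) ->
    exists w : Th -> Prop,
      card_lt w (fullset Th) /\ positive I (fun x => exists i, w i /\ A i x).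

(* Main.v *)
Require Import Defs.
From Stdlib Require Import Classical ClassicalEpsilon FunctionalExtensionality ProofIrrelevance.

Lemma sig_eq' {A} (P : A -> Prop) (u v : {a | P a}) : proj1_sig u = proj1_sig v -> u = v.
Proof. destruct u, v; simpl; intros ->; f_equal; apply proof_irrelevance. Qed.

Lemma my_choice {A B} (R : A -> B -> Prop) : (forall a, exists b, R a b) -> exists f, forall a, R a (f a).
Proof. intros H. exists (fun a => proj1_sig (constructive_indefinite_description _ (H a))).
  intro a. exact (proj2_sig (constructive_indefinite_description _ (H a))). Qed.

Lemma inj_incl {T} (X : T -> Prop) : inj_le X (fullset T).
Proof. exists (fun u => exist (fullset T) (proj1_sig u) I). intros u v H.
  apply sig_eq'. injection H; auto. Qed.

Lemma leo_trans {T} (lt : T -> T -> Prop) : well_order lt -> forall x y z, leo lt x y -> leo lt y z -> leo lt x z.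
Proof. intros [_ [Htr _]] x y z H1 H2. unfold leo in *.
  destruct H1 as [->|H1]; auto. destruct H2 as [<-|H2]; auto. right; eauto. Qed.

Lemma not_leo_lt {T} (lt : T -> T -> Prop) : well_order lt -> forall a b, ~ leo lt a b -> lt b a.
Proof. intros [_ [_ [Htot _]]] a b H. unfold leo in H.
  destruct (Htot a b) as [h|[h|h]]; tauto. Qed.

Lemma bound_of_not_cofinal {T} (lt : T -> T -> Prop) (S : T -> Prop) : well_order lt ->
  ~ (forall a, exists b, S b /\ leo lt a b) -> exists a, forall b, S b -> lt b a.
Proof. intros Hwo H. apply not_all_ex_not in H. destruct H as [a Ha]. exists a.
  intros b Sb. apply (not_leo_lt lt Hwo). intro; apply Ha; eauto. Qed.

Lemma small_bounded {T} (lt : T -> T -> Prop) (w : T -> Prop) : is_regular_cardinal lt ->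
  card_lt w (fullset T) -> exists a, forall b, w b -> lt b a.
Proof. intros [[Hwo _] [_ Hreg]] Hc. apply bound_of_not_cofinal; auto.
  intro C. exact (Hreg w C Hc). Qed.

Lemma bound_family {T} (lt : T -> T -> Prop) : is_regular_cardinal lt ->
  forall a (r : forall b, lt b a -> T), exists c, forall b (H : lt b a), lt (r b H) c.
Proof. intros Hr a r.
  destruct (small_bounded lt (fun y => exists b (H : lt b a), y = r b H) Hr) as [c Hc].
  - split; [apply inj_incl|]. intros [e He].
    destruct Hr as [[_ Hcard] _]. apply (Hcard a).
    destruct (my_choice (fun (u : {y | exists b (H : lt b a), y = r b H}) b =>
        exists H : lt b a, proj1_sig u = r b H)) as [c Hc].
    { intros [y Hy]. simpl. exact Hy. }
    exists (fun t => exist (fun x => lt x a) (c (e t)) (let (H, _) := Hc (e t) in H)).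
    intros t1 t2 E. apply (f_equal (@proj1_sig _ _)) in E. simpl in E.
    apply He. apply sig_eq'.
    destruct (Hc (e t1)) as [H1 E1]. destruct (Hc (e t2)) as [H2 E2].
    rewrite E1, E2. revert H1 E1. rewrite E. intros H1 E1.
    rewrite (proof_irrelevance _ H1 H2). reflexivity.
  - exists c. intros b H. apply Hc. eauto.
Qed.
Theorem proposition2p3
  (K : Type) (ltK : K -> K -> Prop) (Th : Type) (ltT : Th -> Th -> Prop)
  (I : (K -> Prop) -> Prop) :
  is_cardinal ltK -> is_ideal ltK I -> is_regular_cardinal ltT ->
  ((@weakly_saturated K Th I /\ @indecomposable K Th I) <->
   (forall B : Th -> K -> Prop,
      (forall i j x, leo ltT i j -> B i x -> B j x) ->
      exists istar, forall i, leo ltT istar i ->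
        eqI I (B i) (fun x => exists j, B j x))) /\
  ((@weakly_saturated K Th I /\ @indecomposable K Th I) <->
   (forall A : Th -> K -> Prop,
      (forall i, positive I (A i)) ->
      exists x, forall i, exists j, leo ltT i j /\ A j x)).
Proof.
  intros HK HI HT.
  destruct HI as [I0 [Isub [Iun [Ifull Ibd]]]].
  pose proof HT as HT'.
  destruct HT' as [[Hwo Hcard] [Hnat Hreg]].
  pose proof Hwo as Hwo'.
  destruct Hwo' as [Hirr [Htr [Htot Hwf]]].
  destruct Hnat as [en Hen].
  pose (t0 := proj1_sig (en (exist (fullset nat) 0 Logic.I))).
  assert (nomax : forall i, exists j, ltT i j).
  { intro i. apply NNPP; intro Hn.
    apply (Hreg (fun y => y = i)).
    - intro a. exists i. split; auto. apply NNPP; intro Ha. apply Hn. exists a.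
      apply (not_leo_lt ltT Hwo). exact Ha.
    - split; [apply inj_incl|]. intros [h Hh].
      assert (E : exist (fullset nat) 0 Logic.I = exist (fullset nat) 1 Logic.I).
      { apply Hen. apply Hh. apply sig_eq'.
        rewrite (proj2_sig (h (en (exist (fullset nat) 0 Logic.I)))).
        rewrite (proj2_sig (h (en (exist (fullset nat) 1 Logic.I)))). reflexivity. }
      discriminate E. }
  assert (leo_refl : forall i, leo ltT i i) by (left; reflexivity).
  assert (P3WS : (forall A : Th -> K -> Prop,
      (forall i, positive I (A i)) ->
      exists x, forall i, exists j, leo ltT i j /\ A j x) ->
      (@weakly_saturated K Th I /\ @indecomposable K Th I)).
  { intros H3. split.
    - intros [P [Ppos [Pdis Pcov]]]. destruct (H3 P Ppos) as [x Hx].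
      destruct (Pcov x) as [j0 Hj0]. destruct (nomax j0) as [i Hi].
      destruct (Hx i) as [j [Hij Hj]]. apply (Pdis j0 j x); auto.
      intro; subst j. destruct Hij as [E|E].
      + subst; eapply Hirr; eauto.
      + eapply Hirr; eauto.
    - intros A HA. apply NNPP; intro Hn.
      assert (Hs : forall i, I (fun x => exists j, leo ltT j i /\ A j x)).
      { intro i. apply NNPP; intro Hp; apply Hn. exists (fun j => leo ltT j i). split; [|exact Hp].
        split; [apply inj_incl|]. intros [h Hh]. destruct (nomax i) as [b Hb]. apply (Hcard b).
        exists (fun t => exist (fun x => ltT x b) (proj1_sig (h t))
          (match proj2_sig (h t) with or_introl e => eq_ind_r (fun z => ltT z b) Hb e
                                   | or_intror l => Htr _ _ _ l Hb end)).
        intros t1 t2 E. apply Hh. apply sig_eq'. apply (f_equal (@proj1_sig _ _)) in E. exact E. }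
      destruct (H3 (fun i x => (exists j, A j x) /\ ~ exists j, leo ltT j i /\ A j x)) as [x Hx].
      + intros i Hp. apply HA. apply (Isub _ (fun x => (((exists j, A j x) /\ ~ exists j, leo ltT j i /\ A j x)) \/ (exists j, leo ltT j i /\ A j x))).
        * apply Iun; auto.
        * intros x Hx. tauto.
      + destruct (Hx t0) as [j [_ [[j0 Hj0] _]]].
        destruct (Hx j0) as [j1 [Hj1 [_ Hn1]]]. apply Hn1. eauto. }
  assert (P3P2 : (forall A : Th -> K -> Prop,
      (forall i, positive I (A i)) ->
      exists x, forall i, exists j, leo ltT i j /\ A j x) ->
     (forall B : Th -> K -> Prop,
      (forall i j x, leo ltT i j -> B i x -> B j x) ->
      exists istar, forall i, leo ltT istar i ->
        eqI I (B i) (fun x => exists j, B j x))).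
  { intros H3 B HB. apply NNPP; intro Hn.
    assert (Hp : forall i, positive I (fun x => (exists j, B j x) /\ ~ B i x)).
    { intros i Hi. apply Hn. exists i. intros k Hk. split.
      - apply (Isub _ (fun _ => False)); auto. intros x [Hx Hx']. apply Hx'. eauto.
      - apply (Isub _ _ Hi). intros x [Hx Hx']. split; auto. intro; apply Hx'. eauto. }
    destruct (H3 _ Hp) as [x Hx]. destruct (Hx t0) as [j [_ [[j0 Hj0] _]]].
    destruct (Hx j0) as [j1 [Hj1 [_ Hn1]]]. apply Hn1. eauto. }
  assert (P2P3 : (forall B : Th -> K -> Prop,
      (forall i j x, leo ltT i j -> B i x -> B j x) ->
      exists istar, forall i, leo ltT istar i ->
        eqI I (B i) (fun x => exists j, B j x)) ->
     (forall A : Th -> K -> Prop,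
      (forall i, positive I (A i)) ->
      exists x, forall i, exists j, leo ltT i j /\ A j x)).
  { intros H2 A HA. apply NNPP; intro Hn.
    destruct (H2 (fun i x => ~ exists j, leo ltT i j /\ A j x)) as [istar Hst].
    { intros i j x Hij Hi [k [Hk Ak]]. apply Hi. exists k. split; auto.
      eapply leo_trans; eauto. }
    destruct (Hst istar (leo_refl istar)) as [_ H]. apply (HA istar).
    apply (Isub _ _ H). intros x Ax. split.
    - apply NNPP; intro Hx. apply Hn. exists x. intro i. apply NNPP; intro Hi.
      apply Hx. exists i. exact Hi.
    - intro Hc. apply Hc. eauto. }
  assert (WSP3 : (@weakly_saturated K Th I /\ @indecomposable K Th I) ->
     (forall A : Th -> K -> Prop,
      (forall i, positive I (A i)) ->
      exists x, forall i, exists j, leo ltT i j /\ A j x)).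
  { intros [HWS HID] A HA. apply NNPP; intro Hn.
    pose (D := fun i x => exists j, leo ltT i j /\ A j x).
    assert (Ddec : forall i i' x, leo ltT i i' -> D i' x -> D i x).
    { intros i i' x H [j [Hj Aj]]. exists j. split; auto. eapply leo_trans; eauto. }
    assert (Dout : forall x, exists i, ~ D i x).
    { intro x. apply NNPP; intro Hx. apply Hn. exists x. intro i. apply NNPP; intro Hi.
      apply Hx. exists i. exact Hi. }
    assert (Hstep : forall i, exists a, positive I (fun x => D i x /\ ~ D a x)).
    { intro i. destruct (HID (fun k x => D i x /\ ~ D k x)) as [w [Hw Hpw]].
      - intro Hu. apply (HA i). apply (Isub _ _ Hu). intros x Ax.
        destruct (Dout x) as [k Hk]. exists k. split; auto. exists i; split; auto.
      - destruct (small_bounded ltT w HT Hw) as [a Ha]. exists a. intro Hia.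
        apply Hpw. apply (Isub _ _ Hia). intros x [k [wk [Dx nDx]]]. split; auto.
        intro Dax. apply nDx. apply (Ddec k a); auto. right; auto. }
    destruct (my_choice _ Hstep) as [f Hf].
    assert (Hb : forall a (r : forall b, ltT b a -> Th), exists c, forall b (H : ltT b a), ltT (f (r b H)) c).
    { intros a r. exact (bound_family ltT HT a (fun b H => f (r b H))). }
    pose (F := fun a (r : forall b, ltT b a -> Th) => proj1_sig (constructive_indefinite_description _ (Hb a r))).
    pose (g := Fix Hwf (fun _ => Th) F).
    assert (Hext : forall x (f1 f2 : forall y, ltT y x -> Th), (forall y p, f1 y p = f2 y p) -> F x f1 = F x f2).
    { intros x f1 f2 E. assert (f1 = f2) as ->; auto.
      extensionality y; extensionality p; auto. }
    assert (Hg : forall a b, ltT b a -> ltT (f (g b)) (g a)).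
    { intros a b H. unfold g. rewrite (Fix_eq Hwf (fun _ => Th) F Hext a).
      exact (proj2_sig (constructive_indefinite_description _ (Hb a (fun y _ => Fix Hwf (fun _ => Th) F y))) b H). }
    pose (Q := fun a x => D (g a) x /\ ~ D (f (g a)) x).
    assert (Qdis : forall a b x, ltT b a -> Q a x -> Q b x -> False).
    { intros a b x H [Da _] [_ nDb]. apply nDb. apply (Ddec _ (g a)); auto. right; auto. }
    apply HWS. exists (fun a x => Q a x \/ (a = t0 /\ ~ exists b, Q b x)). split; [|split].
    - intros a Ha. apply (Hf (g a)). apply (Isub _ _ Ha). intros x Hx. left; exact Hx.
    - intros a b x Hab [Ha|[-> Ha]] [Hb'|[-> Hb']].
      + destruct (Htot a b) as [h|[h|h]]; [eapply Qdis; eauto| tauto | eapply Qdis; eauto].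
      + apply Hb'; eauto.
      + apply Ha; eauto.
      + auto.
    - intro x. destruct (classic (exists b, Q b x)) as [[b Hb']|Hnb].
      + exists b; left; auto.
      + exists t0; right; auto. }
  split; split.
  - intro H; apply P3P2, WSP3, H.
  - intro H; apply P3WS, P2P3, H.
  - exact WSP3.
  - exact P3WS.
Qed.
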